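(* Let $\Sigma$ be a Hamiltonian surface in the Brady complex $X$. Then for every vertex $x$ of $X$, the Hamiltonian cycle $\Sigma\cap L_x$ of the link $L_x$ contains precisely two rungs (edges labeled $\mathcal{L}$).
   Context: The Brady complex $X$ is the simply connected CAT(0) piecewise Euclidean 2-complex (constructed by T. Brady) on which $\mathrm{Aut}(F_2)$ acts properly and cocompactly by cellular isometries, transitively on vertices. Its closed 2-cells (faces) are unit equilateral triangles and unit lozenges (rhombi with angles $\pi/3$ and $2\pi/3$); every edge lies in exactly one triangle and two lozenges. The link $L_x$ of a vertex $x$ is the graph whose vertices are the edges of $X$ at $x$ and whose edges are the corners at $x$ of faces containing $x$; a link edge is labeled $t$ if it comes from a triangle, $\ell$ if from a lozenge corner of angle $\pi/3$, and $\mathcal{L}$ if from a lozenge corner of angle $2\pi/3$. Each labeled link $L_x$ is isomorphic to the Moebius ladder with vertices $u_0,\dots,u_3,w_0,\dots,w_3$, rungs $u_iw_i$ labeled $\mathcal{L}$, horizontal edges $u_0u_1,u_2u_3,w_0w_1,w_2w_3$ labeled $\ell$ and horizontal edges $u_1u_2,u_3w_0,w_1w_2,w_3u_0$ labeled $t$. A Hamiltonian surface in $X$ is a connected union $\Sigma$ of closed faces which is a surface without boundary, contains every vertex and every edge of $X$, and has no multiple vertex; for each vertex $x$, $\Sigma\cap L_x$ (the link edges given by corners of faces of $\Sigma$) is then a Hamiltonian cycle of $L_x$. *)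

(* Defs.v *)
From Stdlib Require Import Relations.
From mathcomp Require Import all_boot.
Set Implicit Arguments. Unset Strict Implicit. Unset Printing Implicit Defensive.

Inductive shape := Tri | Loz.
Definition nsides (s : shape) : nat := match s with Tri => 3 | Loz => 4 end.

(* lab_t = t (triangle corner), lab_l = small ell (lozenge corner of angle pi/3),
   lab_L = calligraphic L (lozenge corner of angle 2pi/3) *)
Inductive label := lab_t | lab_l | lab_L.

Inductive lvert := u0 | u1 | u2 | u3 | w0 | w1 | w2 | w3.
Inductive ledge :=
  | rung0 | rung1 | rung2 | rung3
  | hl0 | hl1 | hl2 | hl3
  | ht0 | ht1 | ht2 | ht3.

Definition ledge_ends (a : ledge) : lvert * lvert :=
  match a with
  | rung0 => (u0, w0) | rung1 => (u1, w1) | rung2 => (u2, w2) | rung3 => (u3, w3)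
  | hl0 => (u0, u1) | hl1 => (u2, u3) | hl2 => (w0, w1) | hl3 => (w2, w3)
  | ht0 => (u1, u2) | ht1 => (u3, w0) | ht2 => (w1, w2) | ht3 => (w3, u0)
  end.

Definition ledge_label (a : ledge) : label :=
  match a with
  | rung0 | rung1 | rung2 | rung3 => lab_L
  | hl0 | hl1 | hl2 | hl3 => lab_l
  | ht0 | ht1 | ht2 | ht3 => lab_t
  end.

(* Convention encoding the metric: in a
   lozenge the corners of even index have angle pi/3, those of odd index 2pi/3. *)
Record complex2 := Complex2 {
  vert : Type;
  edge : Type;
  face : Type;
  eend1 : edge -> vert;
  eend2 : edge -> vert;
  fshape : face -> shape;
  fvert : face -> nat -> vert;
  fedge : face -> nat -> edge
}.

Section Complex.
Variable X : complex2.

Definition fsize (f : face X) : nat := nsides (fshape f).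

Definition incident (e : edge X) (x : vert X) : Prop := eend1 e = x \/ eend2 e = x.

Definition joins (e : edge X) (x y : vert X) : Prop :=
  (eend1 e = x /\ eend2 e = y) \/ (eend1 e = y /\ eend2 e = x).

Definition well_formed : Prop :=
  (forall e : edge X, eend1 e <> eend2 e) /\
  (forall f i, i < fsize f -> joins (fedge f i) (fvert f i) (fvert f (i.+1 %% fsize f))) /\
  (forall f i j, i < fsize f -> j < fsize f -> fvert f i = fvert f j -> i = j) /\
  (forall f i j, i < fsize f -> j < fsize f -> fedge f i = fedge f j -> i = j).

Definition oedge := (edge X * bool)%type.
Definition osrc (d : oedge) : vert X := if d.2 then eend1 d.1 else eend2 d.1.
Definition otgt (d : oedge) : vert X := if d.2 then eend2 d.1 else eend1 d.1.
Definition oinv (d : oedge) : oedge := (d.1, ~~ d.2).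

Fixpoint is_path (x : vert X) (p : seq oedge) : Prop :=
  match p with
  | [::] => True
  | d :: p' => osrc d = x /\ is_path (otgt d) p'
  end.

Fixpoint endpt (x : vert X) (p : seq oedge) : vert X :=
  match p with
  | [::] => x
  | d :: p' => endpt (otgt d) p'
  end.

Definition face_word (f : face X) (r : seq oedge) : Prop :=
  size r = fsize f /\
  exists k, forall j d, onth r j = Some d ->
    d.1 = fedge f ((k + j) %% fsize f) /\ osrc d = fvert f ((k + j) %% fsize f).

Definition face_loop (f : face X) (r : seq oedge) : Prop :=
  face_word f r \/ face_word f (rev (map oinv r)).

Definition elementary_loop (r : seq oedge) (v : vert X) : Prop :=
  is_path v r /\ ((exists d, r = [:: d; oinv d]) \/ (exists f, face_loop f r)).

Definition hstep (x : vert X) (p q : seq oedge) : Prop :=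
  exists a b r, p = a ++ b /\ q = a ++ r ++ b /\ elementary_loop r (endpt x a).

Definition connected : Prop :=
  forall x y : vert X, exists p, is_path x p /\ endpt x p = y.

Definition simply_connected : Prop :=
  connected /\
  forall (x : vert X) (p : seq oedge), is_path x p -> endpt x p = x ->
    clos_refl_sym_trans _ (hstep x) p [::].

Definition corner_at (x : vert X) (f : face X) (i : nat) : Prop :=
  i < fsize f /\ fvert f i = x.

(* the two link vertices (edges at x) joined by the corner (f, i) *)
Definition corner_e1 (f : face X) (i : nat) : edge X :=
  fedge f ((i + fsize f).-1 %% fsize f).
Definition corner_e2 (f : face X) (i : nat) : edge X := fedge f i.

Definition corner_label (f : face X) (i : nat) : label :=
  match fshape f with
  | Tri => lab_t
  | Loz => if odd i then lab_L else lab_l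
  end.

Definition corner_joins (f : face X) (i : nat) (e e' : edge X) : Prop :=
  (corner_e1 f i = e /\ corner_e2 f i = e') \/ (corner_e1 f i = e' /\ corner_e2 f i = e).

Definition link_is_ladder (x : vert X) : Prop :=
  exists (phi : edge X -> lvert) (psi : face X -> nat -> ledge),
    (forall e e', incident e x -> incident e' x -> phi e = phi e' -> e = e') /\
    (forall v, exists e, incident e x /\ phi e = v) /\
    (forall f i f' i', corner_at x f i -> corner_at x f' i' ->
        psi f i = psi f' i' -> f = f' /\ i = i') /\
    (forall a, exists f i, corner_at x f i /\ psi f i = a) /\
    (forall f i, corner_at x f i ->
        ((phi (corner_e1 f i), phi (corner_e2 f i)) = ledge_ends (psi f i) \/
         (phi (corner_e2 f i), phi (corner_e1 f i)) = ledge_ends (psi f i)) /\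
        corner_label f i = ledge_label (psi f i)).

Definition brady_complex : Prop :=
  well_formed /\ simply_connected /\ forall x, link_is_ladder x.

Definition face_has_edge (f : face X) (e : edge X) : Prop :=
  exists i, i < fsize f /\ fedge f i = e.
Definition face_has_vert (f : face X) (x : vert X) : Prop :=
  exists i, i < fsize f /\ fvert f i = x.

Definition link_single_cycle (S : face X -> Prop) (x : vert X) : Prop :=
  exists (m : nat) (es : nat -> edge X) (cs : nat -> (face X * nat)%type),
    3 <= m /\
    (forall j k, j < m -> k < m -> es j = es k -> j = k) /\
    (forall j k, j < m -> k < m -> cs j = cs k -> j = k) /\
    (forall j, j < m -> corner_at x (cs j).1 (cs j).2 /\ S (cs j).1 /\
                        corner_joins (cs j).1 (cs j).2 (es j) (es (j.+1 %% m))) /\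
    (forall f i, corner_at x f i -> S f -> exists j, j < m /\ cs j = (f, i)).

Definition hamiltonian_surface (S : face X -> Prop) : Prop :=
  (forall f g, S f -> S g ->
     clos_refl_trans _ (fun f' g' => S f' /\ S g' /\
        exists x, face_has_vert f' x /\ face_has_vert g' x) f g) /\
  (forall x, exists f, S f /\ face_has_vert f x) /\
  (forall e, exists f1 f2, f1 <> f2 /\ S f1 /\ S f2 /\
       face_has_edge f1 e /\ face_has_edge f2 e /\
       forall f, S f -> face_has_edge f e -> f = f1 \/ f = f2) /\
  (forall x, link_single_cycle S x).

Definition exactly_two_rungs (S : face X -> Prop) (x : vert X) : Prop :=
  exists f1 i1 f2 i2, (f1, i1) <> (f2, i2) /\
    corner_at x f1 i1 /\ S f1 /\ corner_label f1 i1 = lab_L /\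
    corner_at x f2 i2 /\ S f2 /\ corner_label f2 i2 = lab_L /\
    forall f i, corner_at x f i -> S f -> corner_label f i = lab_L ->
      (f, i) = (f1, i1) \/ (f, i) = (f2, i2).

End Complex.

(* Main.v *)
Require Import Defs.
From Stdlib Require Import Relations.
From mathcomp Require Import all_boot.
From HB Require Import structures.
Set Implicit Arguments. Unset Strict Implicit. Unset Printing Implicit Defensive.

Definition lv_code (v : lvert) : nat :=
  match v with u0 => 0 | u1 => 1 | u2 => 2 | u3 => 3 | w0 => 4 | w1 => 5 | w2 => 6 | w3 => 7 end.
Lemma lv_eqP : Equality.axiom (fun a b => lv_code a == lv_code b).
Proof. move=> a b; apply: (iffP eqP) => [|->//]; by case: a; case: b. Qed.
HB.instance Definition _ := hasDecEq.Build lvert lv_eqP.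

Definition le_code (v : ledge) : nat :=
  match v with rung0 => 0 | rung1 => 1 | rung2 => 2 | rung3 => 3 | hl0 => 4 | hl1 => 5
  | hl2 => 6 | hl3 => 7 | ht0 => 8 | ht1 => 9 | ht2 => 10 | ht3 => 11 end.
Lemma le_eqP : Equality.axiom (fun a b => le_code a == le_code b).
Proof. move=> a b; apply: (iffP eqP) => [|->//]; by case: a; case: b. Qed.
HB.instance Definition _ := hasDecEq.Build ledge le_eqP.

Definition lb_code (v : label) : nat := match v with lab_t => 0 | lab_l => 1 | lab_L => 2 end.
Lemma lb_eqP : Equality.axiom (fun a b => lb_code a == lb_code b).
Proof. move=> a b; apply: (iffP eqP) => [|->//]; by case: a; case: b. Qed.
HB.instance Definition _ := hasDecEq.Build label lb_eqP.

Definition lverts := [:: u0; u1; u2; u3; w0; w1; w2; w3].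
Definition ledges := [:: rung0; rung1; rung2; rung3; hl0; hl1; hl2; hl3; ht0; ht1; ht2; ht3].
Lemma mem_lverts v : v \in lverts. Proof. by case: v. Qed.
Lemma mem_ledges v : v \in ledges. Proof. by case: v. Qed.

Definition ends_match (b : ledge) (u v : lvert) : bool :=
  (ledge_ends b == (u, v)) || (ledge_ends b == (v, u)).
Definition inends (v : lvert) (a : ledge) : bool :=
  ((ledge_ends a).1 == v) || ((ledge_ends a).2 == v).
Definition adj (u v : lvert) : bool := has (fun b => ends_match b u v) ledges.
Definition edge_between (u v : lvert) : ledge :=
  nth rung0 [seq b <- ledges | ends_match b u v] 0.

Definition deg_ok (bs : seq ledge) : bool :=
  all (fun a => if a \notin bs then all (fun a' => if (a' \notin bs) && (a != a') then
     all (fun v => ~~ (inends v a && inends v a')) lverts else true) ledges else true) ledges.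

Definition h2_ok (bs : seq ledge) : bool :=
  all (fun a => if (ledge_label a == lab_l) && (a \notin bs) then
    all (fun b => if ledge_label b == lab_t then
      all (fun c => if (ledge_label c == lab_L) && (c \in bs) then
        all (fun v => all (fun v' => ~~ [&& inends v a, ends_match b v v' & inends v' c])
          lverts) lverts else true) ledges else true) ledges else true) ledges.

Definition rungs := [:: rung0; rung1; rung2; rung3].
Definition rung_pairs := [seq (r, r') | r <- rungs, r' <- rungs].

Definition rung_ok (bs : seq ledge) : bool :=
  all (fun r => r \notin bs) rungs ||
  has (fun p => [&& p.1 != p.2, p.1 \in bs, p.2 \in bs &
        all (fun r => (r \in bs) ==> (r == p.1) || (r == p.2)) rungs]) rung_pairs.

Definition good bs := [&& deg_ok bs, h2_ok bs & rung_ok bs].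

Definition cycle_edges (ps : seq lvert) : seq ledge :=
  [seq edge_between (nth u0 ps j) (nth u0 ps (j.+1 %% size ps)) | j <- iota 0 (size ps)].

Definition final (ps : seq lvert) : bool :=
  if adj (last u0 ps) (head u0 ps) then good (cycle_edges ps) else true.

Fixpoint walks (n : nat) (acc : seq lvert) : bool :=
  match n with
  | 0 => final acc
  | n'.+1 => all (fun p => if adj (last u0 acc) p && (p \notin acc)
                            then walks n' (rcons acc p) else true) lverts
  end.

Definition check := all (fun p0 => walks 7 [:: p0]) lverts.

Lemma allE (T : eqType) (a : pred T) (s : seq T) (x : T) : x \in s -> all a s -> a x.
Proof. by move=> Hx /allP; apply. Qed.

Lemma allIf (T : eqType) (b : bool) (a : pred T) (s : seq T) (x : T) :
  x \in s -> b -> (if b then all a s else true) -> a x.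
Proof. by move=> Hx -> /allP; apply. Qed.

Lemma check_ok : check = true.
Proof. by vm_compute. Qed.

Lemma walksP n acc q : walks n acc -> size q = n -> path adj (last u0 acc) q ->
  uniq (acc ++ q) -> final (acc ++ q).
Proof.
elim: n acc q => [|n IH] acc [|p q] //.
  by move=> H _ _ _; rewrite cats0.
move=> /(allE (mem_lverts p)) Hw [Hs] /= /andP[Ha Hp] Hu.
have Hpn : p \notin acc.
  apply/negP => H; move: Hu; rewrite cat_uniq => /and3P[_ /hasPn Hn _].
  by move: (Hn p); rewrite inE eqxx H => /(_ isT).
rewrite Ha Hpn /= in Hw.
have := IH (rcons acc p) q Hw Hs; rewrite last_rcons cat_rcons; apply => //.
Qed.

Lemma checkP p0 q : size q = 7 -> path adj p0 q -> uniq (p0 :: q) -> final (p0 :: q).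
Proof.
move=> Hs Hp Hu.
have := check_ok; rewrite /check => /(allE (mem_lverts p0)) Hw.
exact: (walksP Hw Hs Hp Hu).
Qed.

Lemma edge_betweenP b u v : ends_match b u v -> edge_between u v = b.
Proof. by case: b; case: u; case: v. Qed.

Lemma ends_match_adj b u v : ends_match b u v -> adj u v.
Proof. by move=> H; apply/hasP; exists b => //; apply: mem_ledges. Qed.

Lemma ends_matchC b u v : ends_match b u v = ends_match b v u.
Proof. by rewrite /ends_match orbC. Qed.

Lemma ends_match_in b u v : ends_match b u v -> inends u b /\ inends v b.
Proof. by case: b; case: u; case: v. Qed.

Lemma good_deg bs a a' v : good bs -> a \notin bs -> a' \notin bs ->
  inends v a -> inends v a' -> a = a'.
Proof.
rewrite /good /deg_ok; case/and3P => /(allE (mem_ledges a)) Hd _ _ Ha Ha' Hv Hv'.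
case: (eqVneq a a') => // Hne.
move: Hd => /(allIf (mem_ledges a') Ha); rewrite Ha' Hne.
move=> /(@allIf _ (true && true) _ _ v (mem_lverts v) isT).
by rewrite Hv Hv'.
Qed.

Lemma good_h2 bs a b c v v' : good bs -> ledge_label a = lab_l -> a \notin bs ->
  ledge_label b = lab_t -> ledge_label c = lab_L ->
  inends v a -> ends_match b v v' -> inends v' c -> c \notin bs.
Proof.
rewrite /good /h2_ok; case/and3P => _ /(allE (mem_ledges a)) H _ La Ha Lb Lc Hv Hb Hc.
apply/negP => Hcin.
move: H; rewrite La Ha eqxx => /(@allIf _ (true && true) _ _ b (mem_ledges b) isT).
rewrite Lb eqxx => /(@allIf _ true _ _ c (mem_ledges c) isT).
rewrite Lc Hcin eqxx => /(@allIf _ (true && true) _ _ v (mem_lverts v) isT).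
by move/(allE (mem_lverts v')); rewrite Hv Hb Hc.
Qed.

Lemma labL_rungs r : ledge_label r = lab_L -> r \in rungs.
Proof. by case: r. Qed.

Lemma good_rung bs : good bs ->
  (forall r, ledge_label r = lab_L -> r \notin bs) \/
  (exists r1 r2, [/\ r1 <> r2, ledge_label r1 = lab_L, ledge_label r2 = lab_L,
     r1 \in bs & r2 \in bs] /\
     (forall r, ledge_label r = lab_L -> r \in bs -> r = r1 \/ r = r2)).
Proof.
rewrite /good /rung_ok; case/and3P => _ _ /orP[H|/hasP[[r1 r2] /allpairsP[[a b] [/= Ha Hb [-> ->]]]]].
  by left => r /labL_rungs Hr; exact: (allE Hr H).
case/and4P => /eqP Hne H1 H2 Hall; right; exists a, b; split; first split => //.
- by clear -Ha; move: Ha; case: a.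
- by clear -Hb; move: Hb; case: b.
- move=> r Lr Hin; move: Hall; case: r Lr Hin => // _ Hin /and5P[G0 G1 G2 G3 _];
    [move: G0|move: G1|move: G2|move: G3]; rewrite Hin /= => /orP[/eqP->|/eqP->]; by [left|right].
Qed.

Definition rof (v : lvert) : ledge :=
  match v with u0 | w0 => rung0 | u1 | w1 => rung1 | u2 | w2 => rung2 | u3 | w3 => rung3 end.
Lemma rof_spec v : ledge_label (rof v) = lab_L /\ inends v (rof v).
Proof. by case: v. Qed.

Lemma ends_match_inv b u v w : ends_match b u v -> inends w b -> w = u \/ w = v.
Proof.
rewrite /ends_match /inends; case: (ledge_ends b) => p q.
by case/orP => /eqP [E1 E2]; subst => /= /orP [] /eqP ->; auto.
Qed.

Definition prv (n i : nat) := (i + n).-1 %% n.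

Lemma prv_spec n i : (n = 3 \/ n = 4) -> i < n ->
  [/\ prv n i < n, (prv n i).+1 %% n = i, prv n (i.+1 %% n) = i & (i.+1 %% n) < n].
Proof. by case=> ->; case: i => [|[|[|[|i]]]]. Qed.

Lemma prv_odd i : i < 4 -> odd (prv 4 i) = ~~ odd i /\ odd (i.+1 %% 4) = ~~ odd i.
Proof. by case: i => [|[|[|[|i]]]]. Qed.

Section Geo.
Variable X : complex2.
Hypothesis WF : well_formed X.
Variable S : face X -> Prop.
Hypothesis HS : hamiltonian_surface S.

Lemma fsize34 (f : face X) : fsize f = 3 \/ fsize f = 4.
Proof. by rewrite /fsize; case: (fshape f); [left|right]. Qed.

Lemma WFj (f : face X) i : i < fsize f -> joins (fedge f i) (fvert f i) (fvert f (i.+1 %% fsize f)).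
Proof. by case: WF => _ [H _]; apply: H. Qed.

Lemma joins_inc (e : edge X) a b : joins e a b -> incident e a /\ incident e b.
Proof. by rewrite /joins /incident; case=> [[-> ->]|[-> ->]]; split; auto. Qed.

Lemma joinsC (e : edge X) a b : joins e a b -> joins e b a.
Proof. by rewrite /joins; case; auto. Qed.

Lemma joins_neq (e : edge X) a b : joins e a b -> a <> b.
Proof.
case: WF => He _; rewrite /joins => [[[H1 H2]|[H1 H2]]] Hab; apply: (He e);
by rewrite H1 H2.
Qed.

Lemma joins_other (e : edge X) a b c : joins e a b -> joins e a c -> b = c.
Proof.
move=> J1 J2; have := joins_neq J1; have := joins_neq J2.
case: J1 => [[H1 H2]|[H1 H2]]; case: J2 => [[H3 H4]|[H3 H4]]; congruence.
Qed.

Lemma corner_inc (y : vert X) (f : face X) i : corner_at y f i ->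
  incident (corner_e1 f i) y /\ incident (corner_e2 f i) y.
Proof.
case=> Hi Hy; have [P1 P2 _ _] := prv_spec (fsize34 f) Hi.
split.
- have := WFj P1; rewrite P2 Hy => /joins_inc [] //.
- by have := WFj Hi; rewrite Hy => /joins_inc [].
Qed.

Lemma cross (g : face X) k (y z : vert X) (e : edge X) : k < fsize g -> fvert g k = y ->
  (corner_e1 g k = e \/ corner_e2 g k = e) -> joins e y z ->
  exists k', corner_at z g k' /\ (corner_e1 g k' = e \/ corner_e2 g k' = e) /\
    (fshape g = Loz -> odd k' = ~~ odd k).
Proof.
move=> Hk Hy He J.
have [P1 P2 P3 P4] := prv_spec (fsize34 g) Hk.
case: He => He.
- exists (prv (fsize g) k); split; [split|split] => //.
  + have := WFj P1; rewrite P2 Hy.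
    change (fedge g (prv (fsize g) k)) with (corner_e1 g k); rewrite He => /joinsC J'.
    by rewrite (joins_other J J').
  + by right.
  + move=> HL; have Hk4 : k < 4 by move: Hk; rewrite /fsize HL.
    have [O1 O2] := prv_odd Hk4; rewrite /fsize HL; exact O1.
- exists (k.+1 %% fsize g); split; [split|split] => //.
  + have := WFj Hk; rewrite Hy.
    change (fedge g k) with (corner_e2 g k); rewrite He => J'.
    by rewrite (joins_other J J').
  + by left; rewrite -He /corner_e1 /corner_e2; congr fedge; exact: P3.
  + move=> HL; have Hk4 : k < 4 by move: Hk; rewrite /fsize HL.
    have [O1 O2] := prv_odd Hk4; rewrite /fsize HL; exact O2.
Qed.

Definition ladder (y : vert X) (phi : edge X -> lvert) (psi : face X -> nat -> ledge) : Prop :=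
    (forall e e', incident e y -> incident e' y -> phi e = phi e' -> e = e') /\
    (forall v, exists e, incident e y /\ phi e = v) /\
    (forall f i f' i', corner_at y f i -> corner_at y f' i' ->
        psi f i = psi f' i' -> f = f' /\ i = i') /\
    (forall a, exists f i, corner_at y f i /\ psi f i = a) /\
    (forall f i, corner_at y f i ->
        ((phi (corner_e1 f i), phi (corner_e2 f i)) = ledge_ends (psi f i) \/
         (phi (corner_e2 f i), phi (corner_e1 f i)) = ledge_ends (psi f i)) /\
        corner_label f i = ledge_label (psi f i)).

Lemma ladder_em y phi psi f i : ladder y phi psi -> corner_at y f i ->
  ends_match (psi f i) (phi (corner_e1 f i)) (phi (corner_e2 f i)) /\
  corner_label f i = ledge_label (psi f i).
Proof.
case=> _ [_ [_ [_ H]]] Hc; have [[E|E] L] := H f i Hc; split => //;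
by rewrite /ends_match -E eqxx ?orbT.
Qed.

Lemma inends_corner y phi psi g k e : ladder y phi psi -> corner_at y g k ->
  (corner_e1 g k = e \/ corner_e2 g k = e) -> inends (phi e) (psi g k).
Proof.
move=> HL Hc He; have [/ends_match_in [I1 I2] _] := ladder_em HL Hc.
by case: He => <-.
Qed.

Lemma corner_of y phi psi e a : ladder y phi psi -> incident e y -> inends (phi e) a ->
  exists g k, corner_at y g k /\ psi g k = a /\ (corner_e1 g k = e \/ corner_e2 g k = e).
Proof.
move=> HL He Ha; have HL' := HL; case: HL' => Hphi [_ [_ [Hs _]]].
have [g [k [Hc Hk]]] := Hs a; exists g, k; split => //; split => //.
have [Hem _] := ladder_em HL Hc; rewrite Hk in Hem.
have [I1 I2] := corner_inc Hc.
case: (ends_match_inv Hem Ha) => /(Hphi _ _ He) H; [left|right]; symmetry; apply: H => //.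
Qed.

Lemma lab_t_tri (f : face X) i : corner_label f i = lab_t -> fshape f = Tri.
Proof. by rewrite /corner_label; case: (fshape f) => //; case: (odd i). Qed.

Lemma lab_L_loz (f : face X) i : corner_label f i = lab_L -> fshape f = Loz /\ odd i.
Proof. by rewrite /corner_label; case: (fshape f) => //; case: (odd i). Qed.

Lemma lab_loz_even (f : face X) i : fshape f = Loz -> ~~ odd i -> corner_label f i = lab_l.
Proof. by rewrite /corner_label => ->; case: (odd i). Qed.

Lemma Lcorner y phi psi e : ladder y phi psi -> incident e y ->
  exists g k, [/\ corner_at y g k, psi g k = rof (phi e), fshape g = Loz, odd k &
     (corner_e1 g k = e \/ corner_e2 g k = e)].
Proof.
move=> HL He; have [RL RI] := rof_spec (phi e).
have [g [k [Hc [Hp Hce]]]] := corner_of HL He RI.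
have [_ Lb] := ladder_em HL Hc; rewrite Hp RL in Lb.
have [Lz Od] := lab_L_loz Lb.
by exists g, k; split.
Qed.

Lemma vertex_good y phi psi : ladder y phi psi ->
  exists bs, good bs /\ forall f i, corner_at y f i -> (S f <-> psi f i \in bs).
Proof.
move=> HL; have HL' := HL; case: HL' => [Hphi [Hsurj [Hpsi [Hpsurj Hlab]]]].
have [m [es [cs [Hm [Hes [Hcs [Hcyc Hcov]]]]]]] := HS.2.2.2 y.
have m0 : 0 < m by apply: leq_trans Hm.
have inc : forall j, j < m -> incident (es j) y.
  move=> j Hj; have [Hc [_ Hjn]] := Hcyc j Hj; have [I1 I2] := corner_inc Hc.
  by case: Hjn => [[<- _]|[_ <-]].
pose P j := phi (es j).
have Pinj : forall j k, j < m -> k < m -> P j = P k -> j = k.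
  by move=> j k Hj Hk E; apply: Hes => //; apply: Hphi => //; apply: inc.
have Hce : forall f i e, corner_at y f i -> S f -> (corner_e1 f i = e \/ corner_e2 f i = e) ->
    exists j, j < m /\ es j = e.
  move=> f i e Hc Sf He; have [j [Hj Ej]] := Hcov f i Hc Sf.
  have [_ [_ Hjn]] := Hcyc j Hj; rewrite Ej /= in Hjn.
  have Hj1 : j.+1 %% m < m by rewrite ltn_pmod.
  by case: Hjn => [[E1 E2]|[E1 E2]]; case: He => <-;
    [exists j|exists (j.+1 %% m)|exists (j.+1 %% m)|exists j]; split => //; rewrite ?E1 ?E2.
have Pcov : forall v, exists j, j < m /\ P j = v.
  move=> v; have [e [He <-]] := Hsurj v.
  have [f1 [f2 [_ [Sf1 [_ [[i [Hi Hfe]] _]]]]]] := HS.2.2.1 e.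
  have J := WFj Hi; rewrite Hfe in J.
  have [P1 P2 P3 P4] := prv_spec (fsize34 f1) Hi.
  have : y = fvert f1 i \/ y = fvert f1 (i.+1 %% fsize f1).
    by case: J => [[E1 E2]|[E1 E2]]; case: He => Ey; first [left; congruence | right; congruence].
  case=> Ey.
  - have [j [Hj Ej]] := Hce f1 i e (conj Hi (esym Ey)) Sf1 (or_intror Hfe).
    by exists j; rewrite /P Ej.
  - have Hc : corner_at y f1 (i.+1 %% fsize f1) by [].
    have He1 : corner_e1 f1 (i.+1 %% fsize f1) = e.
      by rewrite -Hfe /corner_e1; congr fedge; exact: P3.
    have [j [Hj Ej]] := Hce _ _ e Hc Sf1 (or_introl He1).
    by exists j; rewrite /P Ej.
pose ps := map P (iota 0 m).
have Hu : uniq ps.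
  rewrite map_inj_in_uniq ?iota_uniq // => j k; rewrite !mem_iota !add0n.
  by move=> /andP[_ Hj] /andP[_ Hk]; apply: Pinj.
have m8 : m = 8.
  have h1 : 8 <= m.
    have := @uniq_leq_size _ lverts ps isT; rewrite size_map size_iota; apply.
    move=> v _; have [j [Hj <-]] := Pcov v; apply/mapP; exists j => //.
    by rewrite mem_iota add0n Hj.
  have h2 : m <= 8.
    by have := uniq_leq_size Hu (fun v _ => mem_lverts v); rewrite size_map size_iota.
  by apply/eqP; rewrite eqn_leq h1 h2.
subst m.
pose B j := psi (cs j).1 (cs j).2.
have Hem : forall j, j < 8 -> ends_match (B j) (P j) (P (j.+1 %% 8)).
  move=> j Hj; have [Hc [_ Hjn]] := Hcyc j Hj.
  have [E _] := ladder_em HL Hc.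
  by case: Hjn => [[E1 E2]|[E1 E2]]; rewrite /P -E1 -E2 // ends_matchC.
have Hadj : forall j, j < 7 -> adj (P j) (P j.+1).
  move=> j Hj; have := Hem j (leq_trans Hj (leqnSn 7)).
  rewrite modn_small; last by [].
  exact: ends_match_adj.
have Hpath : path adj (P 0) (map P (iota 1 7)).
  by rewrite /= !Hadj.
have Hsz : size (map P (iota 1 7)) = 7 by rewrite size_map size_iota.
have Hf := checkP Hsz Hpath Hu.
have Hlast : adj (last u0 (P 0 :: map P (iota 1 7))) (head u0 (P 0 :: map P (iota 1 7))).
  by have := Hem 7 isT; rewrite modnn => /ends_match_adj.
rewrite /final Hlast in Hf.
have Hce8 : cycle_edges (P 0 :: map P (iota 1 7)) = map B (iota 0 8).
  change (P 0 :: map P (iota 1 7)) with ps.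
  rewrite /cycle_edges /ps size_map size_iota; apply/eq_in_map => j.
  rewrite mem_iota add0n => /andP[_ Hj].
  have Hj1 : j.+1 %% 8 < 8 by rewrite ltn_pmod.
  rewrite !(nth_map 0) ?size_iota // !nth_iota // !add0n.
  exact: edge_betweenP (Hem j Hj).
rewrite Hce8 in Hf.
exists (map B (iota 0 8)); split => // f i Hc; split.
- move=> Sf; have [j [Hj Ej]] := Hcov f i Hc Sf.
  apply/mapP; exists j; first by rewrite mem_iota add0n Hj.
  by rewrite /B Ej.
- case/mapP => j; rewrite mem_iota add0n => /andP[_ Hj] E.
  have [Hc' [Sj _]] := Hcyc j Hj.
  by have [-> _] := Hpsi _ _ _ _ Hc Hc' E.
Qed.

End Geo.

Lemma no_rim (X : complex2) (HX : brady_complex X) (S : face X -> Prop)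
  (HS : hamiltonian_surface S) (x : vert X) phi psi (bs : seq ledge) :
  ladder x phi psi -> (forall f i, corner_at x f i -> (S f <-> psi f i \in bs)) ->
  (forall r, ledge_label r = lab_L -> r \notin bs) -> False.
Proof.
move=> HL Hiff Hno.
have WF := HX.1.
have Lout : forall e, incident e x -> exists g k, [/\ corner_at x g k, fshape g = Loz, odd k,
    (corner_e1 g k = e \/ corner_e2 g k = e) & ~ S g].
  move=> e He; have [g [k [Hc Hp Lz Od Hce]]] := Lcorner WF HL He.
  exists g, k; split => // Sg; have := (Hiff g k Hc).1 Sg; rewrite Hp.
  by have [RL _] := rof_spec (phi e); move: (Hno _ RL) => /negP.
have HL' := HL; case: HL' => _ [_ [_ [Hpsurj _]]].
have [f [i [Cf Ef]]] := Hpsurj ht0.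
have [_ Lf] := ladder_em HL Cf; rewrite Ef /= in Lf.
have Tf := lab_t_tri Lf.
have n3 : fsize f = 3 by rewrite /fsize Tf.
case: (Cf) => Hi Hxi.
pose j1 := i.+1 %% 3. pose j2 := prv 3 i.
have Hi3 : i < 3 by rewrite -n3.
have [[T1 T2 T3 T4] [T5 T6 T7 T8]] : [/\ corner_e1 f j1 = fedge f i, corner_e2 f j1 = fedge f j1,
   corner_e1 f j2 = fedge f j1 & corner_e2 f j2 = corner_e1 f i] /\
   [/\ j1 < 3, j2 < 3, j1.+1 %% 3 = j2 & j2.+1 %% 3 = i].
  by rewrite /j1 /j2 /corner_e1 /corner_e2 n3; clear -Hi3; case: i Hi3 => [|[|[|i]]].
pose e1 := fedge f i. pose e2 := fedge f j2. pose e3 := fedge f j1.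
pose a1 := fvert f j1. pose a2 := fvert f j2.
have J1 : joins e1 x a1 by have := WFj WF Hi; rewrite n3 Hxi.
have T5' : j1 < fsize f by rewrite n3.
have T6' : j2 < fsize f by rewrite n3.
have J3 : joins e3 a1 a2 by have := WFj WF T5'; rewrite n3 T7.
have J2 : joins e2 x a2 by apply: joinsC; have := WFj WF T6'; rewrite n3 T8 Hxi.
have [g1 [k1 [Cg1 Lg1 Og1 Eg1 Ng1]]] := Lout e1 (joins_inc J1).1.
have [g2 [k2 [Cg2 Lg2 Og2 Eg2 Ng2]]] := Lout e2 (joins_inc J2).1.
case: Cg1 => Hk1 Hx1; case: Cg2 => Hk2 Hx2.
have [k1' [Cg1' [Eg1' Pg1']]] := cross WF Hk1 Hx1 Eg1 J1.
have [k2' [Cg2' [Eg2' Pg2']]] := cross WF Hk2 Hx2 Eg2 J2.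
move: (Pg1' Lg1) (Pg2' Lg2); rewrite Og1 Og2 /= => Ev1 Ev2.
have [phi1 [psi1 HL1]] := HX.2.2 a1.
have [bs1 [Hg1 Hiff1]] := vertex_good WF HS HL1.
have Cf1 : corner_at a1 f j1 by split; rewrite ?n3.
have [h [kh [Ch Hph Lh Oh Eh]]] := Lcorner WF HL1 (joins_inc J3).1.
have Nh : ~ S h.
  move=> Sh; have := (Hiff1 h kh Ch).1 Sh; apply/negP.
  have [RL RI] := rof_spec (phi1 e3).
  have [Ea La] := ladder_em HL1 Cg1'.
  have [Eb Lb] := ladder_em HL1 Cf1.
  apply: (@good_h2 bs1 (psi1 g1 k1') (psi1 f j1) (psi1 h kh) (phi1 e1) (phi1 e3)) => //.
  - by rewrite -La; apply: lab_loz_even => //; rewrite Ev1.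
  - by apply/negP => /(Hiff1 _ _ Cg1').2.
  - by rewrite -Lb /corner_label Tf.
  - by rewrite Hph.
  - exact: inends_corner HL1 Cg1' Eg1'.
  - by rewrite T1 T2 in Eb.
  - by rewrite Hph.
case: (Ch) => Hkh Hah.
have [kh2 [Ch2 [Eh2 Ph2]]] := cross WF Hkh Hah Eh J3.
move: (Ph2 Lh); rewrite Oh /= => Evh.
have [phi2 [psi2 HL2]] := HX.2.2 a2.
have [bs2 [Hg2 Hiff2]] := vertex_good WF HS HL2.
have Cf2 : corner_at a2 f j2 by split; rewrite ?n3.
have [h' [kh' [Ch' Hph' Lh' Oh' Eh']]] := Lcorner WF HL2 (joins_inc J3).2.
have Nh' : ~ S h'.
  move=> Sh; have := (Hiff2 h' kh' Ch').1 Sh; apply/negP.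
  have [RL RI] := rof_spec (phi2 e3).
  have [Ea La] := ladder_em HL2 Cg2'.
  have [Eb Lb] := ladder_em HL2 Cf2.
  apply: (@good_h2 bs2 (psi2 g2 k2') (psi2 f j2) (psi2 h' kh') (phi2 e2) (phi2 e3)) => //.
  - by rewrite -La; apply: lab_loz_even => //; rewrite Ev2.
  - by apply/negP => /(Hiff2 _ _ Cg2').2.
  - by rewrite -Lb /corner_label Tf.
  - by rewrite Hph'.
  - exact: inends_corner HL2 Cg2' Eg2'.
  - by rewrite ends_matchC; move: Eb; rewrite T3.
  - by rewrite Hph'.
have HL2' := HL2; case: HL2' => _ [_ [Hpsi2 _]].
have Eq : psi2 h kh2 = psi2 h' kh'.
  apply: (@good_deg bs2 _ _ (phi2 e3) Hg2).
  - by apply/negP => /(Hiff2 _ _ Ch2).2.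
  - by apply/negP => /(Hiff2 _ _ Ch').2.
  - exact: inends_corner HL2 Ch2 Eh2.
  - exact: inends_corner HL2 Ch' Eh'.
have [_ Ek] := Hpsi2 _ _ _ _ Ch2 Ch' Eq.
by move: Evh; rewrite Ek Oh'.
Qed.

Theorem mainTheorem4 (X : complex2) (HX : brady_complex X)
  (S : face X -> Prop) (HS : hamiltonian_surface S) (x : vert X) :
  exactly_two_rungs S x.
Proof.
have WF := HX.1.
have [phi [psi HL]] := HX.2.2 x.
have [bs [Hg Hiff]] := vertex_good WF HS HL.
case: (good_rung Hg) => [Hno|[r1 [r2 [[Hne L1 L2 I1 I2] Hall]]]].
  by exfalso; apply: (no_rim HX HS HL Hiff Hno).
have HL' := HL; case: HL' => _ [_ [Hpsi [Hpsurj _]]].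
have [f1 [i1 [C1 E1]]] := Hpsurj r1.
have [f2 [i2 [C2 E2]]] := Hpsurj r2.
exists f1, i1, f2, i2; split.
- by case=> E E'; apply: Hne; rewrite -E1 -E2 E E'.
split => //; split; first by apply/(Hiff _ _ C1); rewrite E1.
split; first by have [_ ->] := ladder_em HL C1; rewrite E1.
split => //; split; first by apply/(Hiff _ _ C2); rewrite E2.
split; first by have [_ ->] := ladder_em HL C2; rewrite E2.
move=> f i C Sf Lb.
have Hin := (Hiff _ _ C).1 Sf.
have [_ Lb'] := ladder_em HL C; rewrite Lb in Lb'.
case: (Hall _ (esym Lb') Hin) => E.
- by left; have [-> ->] := Hpsi _ _ _ _ C C1 (etrans E (esym E1)).
- by right; have [-> ->] := Hpsi _ _ _ _ C C2 (etrans E (esym E2)).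
Qed.
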